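(* Let $H^2=H^2(\mathbb{D})$ be the Hardy space on the open unit disc. The differentiation operator $D:f\mapsto f'$ with domain $\mathcal{E}=\{f\in H^2: f'\in H^2\}$ is frequently hypercyclic on $H^2$.
   Context: A (possibly unbounded) densely defined operator $T$ in $X$ is frequently hypercyclic if there is $f\in D(T)$ with $T^nf\in D(T)$ for all $n\ge1$ such that for every non-empty open $U\subset X$ the set $\{n\in\mathbb{N}: T^nf\in U\}$ has positive lower density, where the lower density of $E\subset\mathbb{N}$ is $\liminf_{N\to\infty}\#(E\cap\{1,\dots,N\})/N$. *)

(* Defs.v *)
From Stdlib Require Import Reals Lra ClassicalDescription.
From Coquelicot Require Import Coquelicot.
Open Scope R_scope.

(** The Hardy space H^2(D), realised (isometrically, as usual) through Taylor
    coefficients: f(z) = sum_n a n z^n with sum_n |a n|^2 < oo, and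
    ||f||_{H^2}^2 = sum_n |a n|^2. *)
Definition coeffs := nat -> C.

Definition in_H2 (a : coeffs) : Prop :=
  ex_series (fun n => (Cmod (a n))^2).

Definition H2_norm (a : coeffs) : R :=
  sqrt (Series (fun n => (Cmod (a n))^2)).

Definition H2_dist (a b : coeffs) : R :=
  H2_norm (fun n => Cminus (a n) (b n)).

Definition H2_open (U : coeffs -> Prop) : Prop :=
  (forall g, U g -> in_H2 g) /\
  (forall g, U g -> exists eps, 0 < eps /\
      forall h, in_H2 h -> H2_dist g h < eps -> U h).

(** Differentiation f |-> f' on Taylor coefficients:
    (sum a_n z^n)' = sum (n+1) a_{n+1} z^n. *)
Definition Dop (a : coeffs) : coeffs :=
  fun n => Cmult (RtoC (INR (S n))) (a (S n)).

Definition in_dom_D (a : coeffs) : Prop := in_H2 a /\ in_H2 (Dop a).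

Fixpoint count_upto (E : nat -> Prop) (N : nat) : nat :=
  match N with
  | O => O
  | S m => (count_upto E m +
            (if excluded_middle_informative (E (S m)) then 1 else 0))%nat
  end.

Definition lower_density (E : nat -> Prop) : Rbar :=
  LimInf_seq (fun N => INR (count_upto E N) / INR N).

Definition D_frequently_hypercyclic_H2 : Prop :=
  exists f : coeffs,
    in_dom_D f /\
    (forall n : nat, (1 <= n)%nat -> in_dom_D (Nat.iter n Dop f)) /\
    (forall U : coeffs -> Prop, H2_open U -> (exists g, U g) ->
       Rbar_lt (Finite 0)
         (lower_density (fun n => U (Nat.iter n Dop f)))).

(* Main.v *)
Require Import Defs.
From Stdlib Require Import Reals Lra Lia ClassicalEpsilon Classical ClassicalDescription Factorial Cantor ZArith.
From Coquelicot Require Import Coquelicot.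
Open Scope R_scope.

Lemma cnt_S (E : nat -> Prop) N :
  count_upto E (S N) = (count_upto E N + (if excluded_middle_informative (E (S N)) then 1 else 0))%nat.
Proof. reflexivity. Qed.

Lemma cnt_mono (E F : nat -> Prop) N :
  (forall n, (1 <= n <= N)%nat -> E n -> F n) -> (count_upto E N <= count_upto F N)%nat.
Proof.
  induction N as [|N IH]; intros H; simpl; [lia|].
  assert (IH' := IH (fun n Hn => H n ltac:(lia))).
  destruct (excluded_middle_informative (E (S N))) as [e|e];
  destruct (excluded_middle_informative (F (S N))) as [f|f]; try lia.
  exfalso; apply f; apply H; [lia|exact e].
Qed.

Lemma cnt_union (E F : nat -> Prop) N :
  (count_upto (fun n => E n \/ F n) N <= count_upto E N + count_upto F N)%nat.
Proof.
  induction N as [|N IH]; simpl; [lia|].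
  destruct (excluded_middle_informative (E (S N) \/ F (S N))) as [e|e];
  destruct (excluded_middle_informative (E (S N))) as [f|f];
  destruct (excluded_middle_informative (F (S N))) as [g|g]; try lia.
  destruct e; contradiction.
Qed.

Lemma cnt_monoN (E : nat -> Prop) M N : (M <= N)%nat -> (count_upto E M <= count_upto E N)%nat.
Proof.
  induction 1; [lia|]. rewrite cnt_S.
  destruct (excluded_middle_informative (E (S m))); lia.
Qed.

Lemma cnt_split (E : nat -> Prop) M N : (M <= N)%nat ->
  (count_upto E N <= count_upto E M + (N - M))%nat.
Proof.
  induction 1; [lia|]. rewrite cnt_S.
  destruct (excluded_middle_informative (E (S m))); lia.
Qed.

Lemma cnt_const (E : nat -> Prop) M N : (M <= N)%nat ->
  (forall n, (M < n <= N)%nat -> ~ E n) -> count_upto E N = count_upto E M.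
Proof.
  induction 1 as [|N HMN IH]; intros H; [lia|]. simpl.
  rewrite IH by (intros; apply H; lia).
  destruct (excluded_middle_informative (E (S N))) as [e|e]; [|lia].
  exfalso; apply (H (S N)); [lia|exact e].
Qed.

Lemma cnt_step (E : nat -> Prop) M N : (M < N)%nat -> E N ->
  (count_upto E M + 1 <= count_upto E N)%nat.
Proof.
  intros HMN HE. destruct N as [|N]; [lia|]. simpl.
  destruct (excluded_middle_informative (E (S N))) as [e|e]; [|contradiction].
  assert (H := cnt_monoN E M N ltac:(lia)). lia.
Qed.

Lemma cnt_window (E : nat -> Prop) a w N :
  (forall n, E n -> (a <= n <= a + w)%nat) -> (count_upto E N <= w + 1)%nat.
Proof.
  intros H.
  assert (Hlow : forall N', (N' <= a + w)%nat -> (count_upto E N' <= w + 1)%nat).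
  { intros N' HN'.
    destruct a as [|a].
    - assert (HH := cnt_split E 0 N' ltac:(lia)). simpl in HH. lia.
    - destruct (Nat.le_gt_cases a N') as [Ha|Ha].
      + assert (HH := cnt_split E a N' Ha). rewrite (cnt_const E 0 a) in HH; [simpl in HH; lia|lia|].
        intros n Hn Hen. apply H in Hen. lia.
      + rewrite (cnt_const E 0 N'); [simpl; lia|lia|].
        intros n Hn Hen. apply H in Hen. lia. }
  destruct (Nat.le_gt_cases N (a + w)) as [HN|HN]; [now apply Hlow|].
  rewrite (cnt_const E (a + w) N); [apply Hlow; lia|lia|].
  intros n Hn Hen. apply H in Hen. lia.
Qed.

Fixpoint sumnat (f : nat -> nat) (T : nat) : nat :=
  match T with O => O | S t => (sumnat f t + f t)%nat end.

Lemma cnt_bigunion (E : nat -> nat -> Prop) T N :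
  (count_upto (fun n => exists i, (i < T)%nat /\ E i n) N <= sumnat (fun i => count_upto (E i) N) T)%nat.
Proof.
  induction T as [|T IH]; simpl.
  - rewrite (cnt_const _ 0 N); [simpl; lia|lia|]. intros n _ [i [Hi _]]; lia.
  - eapply Nat.le_trans; [apply (cnt_mono _ (fun n => (exists i, (i < T)%nat /\ E i n) \/ E T n))|].
    + intros n _ [i [Hi Ei]].
      destruct (Nat.eq_dec i T) as [->|Hne]; [now right|left; exists i; split; [lia|auto]].
    + eapply Nat.le_trans; [apply cnt_union|]. lia.
Qed.

Lemma cnt_mult (E : nat -> Prop) p t :
  (forall s, (1 <= s)%nat -> E (s * p)%nat) -> (1 <= p)%nat -> (t <= count_upto E (t * p))%nat.
Proof.
  intros H Hp. induction t as [|t IH]; [lia|].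
  assert (HH := cnt_step E (t * p) (S t * p) ltac:(nia) (H (S t) ltac:(lia))). lia.
Qed.

Fixpoint GG (L B : nat -> nat) (j : nat) : nat :=
  match j with
  | O => (L O + B O + 4)%nat
  | S i => (GG L B i + L (S i) + B (S i) + 1)%nat
  end.

Fixpoint PP (L B : nat -> nat) (j : nat) : nat :=
  match j with
  | O => (2 * GG L B O + 2)%nat
  | S i => (2 ^ (S i + 5) * (2 * GG L B (S i) + 2) * PP L B i)%nat
  end.

Lemma pow2_ge (j : nat) : (j + 1 <= 2 ^ j)%nat.
Proof. induction j; simpl; [lia|]. lia. Qed.

Lemma pow2_pos (j : nat) : (1 <= 2 ^ j)%nat.
Proof. assert (H := pow2_ge j). lia. Qed.

Lemma PP_S L B i : PP L B (S i) = (2 ^ (S i + 5) * (2 * GG L B (S i) + 2) * PP L B i)%nat.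
Proof. reflexivity. Qed.
Lemma PP_0 L B : PP L B 0 = (2 * GG L B O + 2)%nat.
Proof. reflexivity. Qed.

Lemma GG_mono L B i j : (i <= j)%nat -> (GG L B i <= GG L B j)%nat.
Proof. induction 1; [lia|simpl; lia]. Qed.

Lemma GG_ge L B j : (L j <= GG L B j /\ B j <= GG L B j /\ 4 <= GG L B j)%nat.
Proof.
  destruct j; simpl; [lia|].
  assert (H := GG_mono L B 0 j ltac:(lia)). simpl in H. lia.
Qed.

Lemma PP_pos L B j : (1 <= PP L B j)%nat.
Proof.
  induction j; [rewrite PP_0; lia|rewrite PP_S].
  assert (H := pow2_pos (S j + 5)). nia.
Qed.

Lemma PP_ge L B j : (GG L B j + j + 1 <= PP L B j /\ 2 * GG L B j + 1 <= PP L B j)%nat.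
Proof.
  destruct j; [rewrite PP_0; lia|rewrite PP_S].
  assert (H := pow2_ge (S j + 5)). assert (H2 := PP_pos L B j).
  set (g := GG L B (S j)) in *. set (p := (2 ^ (S j + 5))%nat) in *.
  assert (p * (2*g+2) <= p * (2*g+2) * PP L B j)%nat by nia. assert (2*g+2 + p <= p * (2*g+2))%nat by nia. lia.
Qed.

Lemma PP_mono L B k j : (k <= j)%nat -> (PP L B k <= PP L B j)%nat.
Proof.
  induction 1; [lia|]. rewrite PP_S.
  assert (H1 := pow2_pos (S m + 5)). set (p := (2 ^ (S m + 5))%nat) in *. nia.
Qed.

Lemma PP_big L B k j : (k < j)%nat ->
  (2 ^ (j + 5) * (2 * GG L B j + 1) * PP L B k <= PP L B j)%nat.
Proof.
  intros Hkj. destruct j as [|j]; [lia|]. rewrite PP_S.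
  assert (H := PP_mono L B k j ltac:(lia)).
  set (p := (2 ^ (S j + 5))%nat) in *. set (g := GG L B (S j)). apply Nat.mul_le_mono; [apply Nat.mul_le_mono_l; lia|exact H].
Qed.

Definition RR L B k n := exists t, (1 <= t)%nat /\ n = (t * PP L B k)%nat.
Definition WW L B j n := exists s, (1 <= s)%nat /\ (n <= s * PP L B j + GG L B j)%nat /\
                                   (s * PP L B j <= n + GG L B j)%nat.
Definition AA L B k n := RR L B k n /\ forall j, (k < j)%nat -> ~ WW L B j n.

Lemma sep L B k j n m : AA L B k n -> AA L B j m -> (n < m)%nat ->
  (GG L B (Nat.max k j) < m - n)%nat.
Proof.
  intros [[t [Ht ->]] Hn] [[t' [Ht' ->]] Hm] Hlt.
  destruct (Nat.lt_total k j) as [Hkj|[<-|Hkj]].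
  - rewrite Nat.max_r by lia.
    destruct (Nat.le_gt_cases (t' * PP L B j - t * PP L B k) (GG L B j)) as [Hc|Hc]; [|lia].
    exfalso. apply (Hn j Hkj). exists t'. lia.
  - rewrite Nat.max_id.
    assert (Hp := PP_ge L B k).
    assert (t < t')%nat by nia. nia.
  - rewrite Nat.max_l by lia.
    destruct (Nat.le_gt_cases (t' * PP L B j - t * PP L B k) (GG L B k)) as [Hc|Hc]; [|lia].
    exfalso. apply (Hm k Hkj). exists t. lia.
Qed.

Lemma sep_eq L B k j n : AA L B k n -> AA L B j n -> k = j.
Proof.
  intros [[t [Ht ->]] Hn] [[t' [Ht' Heq]] Hm].
  destruct (Nat.lt_total k j) as [Hkj|[->|Hkj]]; auto; exfalso.
  - apply (Hn j Hkj). exists t'. lia.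
  - apply (Hm k Hkj). exists t. lia.
Qed.

Lemma AA_ge L B k n : AA L B k n -> (PP L B k <= n)%nat.
Proof. intros [[t [Ht ->]] _]. nia. Qed.

Lemma sumnat_le f g T : (forall i, (i < T)%nat -> (f i <= g i)%nat) -> (sumnat f T <= sumnat g T)%nat.
Proof. induction T; intros H; simpl; [lia|]. assert (H1 := H T ltac:(lia)). assert (IH := IHT (fun i Hi => H i ltac:(lia))). lia. Qed.

Lemma sumnat_const c T : sumnat (fun _ => c) T = (T * c)%nat.
Proof. induction T; simpl; lia. Qed.

Lemma sumnat_geom f M x : (forall j, (j < M)%nat -> INR (f j) <= x / 2 ^ j) ->
  INR (sumnat f M) + 2 * x / 2 ^ M <= 2 * x.
Proof.
  induction M as [|M IH]; intros H; simpl sumnat.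
  - simpl. lra.
  - rewrite plus_INR. assert (IH' := IH (fun j Hj => H j ltac:(lia))).
    assert (H1 := H M ltac:(lia)).
    assert (E : 2 * x / 2 ^ S M = x / 2 ^ M).
    { simpl. field. apply pow_nonzero. lra. }
    rewrite E. lra.
Qed.

Lemma cnt_false N : count_upto (fun _ => False) N = 0%nat.
Proof. rewrite (cnt_const _ 0 N); [reflexivity|lia|tauto]. Qed.

Lemma cnt_WW L B j N :
  (count_upto (WW L B j) N <= ((N + GG L B j) / PP L B j) * (2 * GG L B j + 1))%nat.
Proof.
  set (G := GG L B j). set (P := PP L B j).
  assert (HP := PP_ge L B j). fold G P in HP.
  set (T := ((N + G) / P)%nat).
  eapply Nat.le_trans.
  { apply (cnt_mono _ (fun n => exists i, (i < T)%nat /\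
       (n <= (S i) * P + G /\ (S i) * P <= n + G)%nat)).
    intros n Hn [s [Hs [H1 H2]]]. exists (s - 1)%nat.
    replace (S (s - 1)) with s by lia. split; [|lia].
    assert (s <= T)%nat; [|lia].
    unfold T. apply Nat.div_le_lower_bound; [lia|]. nia. }
  eapply Nat.le_trans; [apply cnt_bigunion|].
  rewrite <- sumnat_const. apply sumnat_le. intros i Hi.
  replace (2 * G + 1)%nat with (2 * G + 1)%nat by lia.
  apply (cnt_window _ (S i * P - G) (2 * G)). intros n [H1 H2].
  assert (S i * P >= P)%nat by nia. lia.
Qed.

Lemma cnt_Y_bound L B k j N : (k < j)%nat ->
  (count_upto (WW L B j) N * (2 ^ j * 16 * PP L B k) <= N)%nat.
Proof.
  intros Hkj. assert (Hc := cnt_WW L B j N).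
  set (c := count_upto (WW L B j) N) in *.
  set (G := GG L B j) in *. set (P := PP L B j) in *.
  assert (HP := PP_ge L B j). fold G P in HP.
  assert (Hbig := PP_big L B k j Hkj). fold G P in Hbig.
  set (T := ((N + G) / P)%nat) in *.
  assert (HT : (T * P <= N + G)%nat) by (unfold T; rewrite Nat.mul_comm; apply Nat.mul_div_le; lia).
  destruct T as [|T'].
  - simpl in Hc. assert (c = 0%nat) by lia. subst; simpl; lia. 
  - assert (HNG : (N + G <= 2 * N)%nat) by nia.
    replace (2 ^ (j + 5))%nat with (2 ^ j * 32)%nat in Hbig
      by (rewrite Nat.pow_add_r; reflexivity).
    set (q := (2 ^ j)%nat) in *. set (pk := PP L B k) in *.
    assert (c * (q * 32 * pk) <= S T' * (2 * G + 1) * (q * 32 * pk))%nat by (apply Nat.mul_le_mono_r; exact Hc).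
    assert (S T' * (2 * G + 1) * (q * 32 * pk) <= S T' * P)%nat.
    { replace (S T' * (2 * G + 1) * (q * 32 * pk))%nat with (S T' * (q * 32 * (2 * G + 1) * pk))%nat by ring.
      apply Nat.mul_le_mono_l. exact Hbig. }
    nia.
Qed.

Lemma density L B k N : (4 * PP L B k <= N)%nat ->
  INR N / (2 * INR (PP L B k)) <= INR (count_upto (AA L B k) N).
Proof.
  intros HN.
  set (pk := PP L B k). assert (Hpk := PP_pos L B k). fold pk in Hpk.
  set (Y := fun j n => (k < j)%nat /\ WW L B j n).
  assert (H1 : (N / pk <= count_upto (RR L B k) N)%nat).
  { eapply Nat.le_trans; [apply (cnt_mult (RR L B k) pk (N / pk))|].
    - intros s Hs. exists s. split; auto.
    - lia.
    - apply cnt_monoN. rewrite Nat.mul_comm. apply Nat.mul_div_le. lia. }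
  assert (H2 : (count_upto (RR L B k) N <= count_upto (AA L B k) N +
                 sumnat (fun j => count_upto (Y j) N) (S N))%nat).
  { eapply Nat.le_trans; [|apply Nat.add_le_mono_l; apply cnt_bigunion].
    eapply Nat.le_trans; [|apply (cnt_union (AA L B k) (fun n => exists i, (i < S N)%nat /\ Y i n))].
    apply cnt_mono. intros n Hn HR.
    destruct (classic (forall j, (k < j)%nat -> ~ WW L B j n)) as [Hc|Hc].
    - left. split; auto.
    - right. apply not_all_ex_not in Hc. destruct Hc as [j Hj].
      apply imply_to_and in Hj. destruct Hj as [Hkj HW]. apply NNPP in HW.
      exists j. split; [|split; auto].
      destruct HW as [s [Hs [Ha Hb]]]. assert (HP := PP_ge L B j).
      assert (s * PP L B j >= PP L B j)%nat by nia. lia. }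
  assert (H3 : INR (sumnat (fun j => count_upto (Y j) N) (S N)) <= 2 * (INR N / (16 * INR pk))).
  { assert (Hg := sumnat_geom (fun j => count_upto (Y j) N) (S N) (INR N / (16 * INR pk))).
    assert (0 <= 2 * (INR N / (16 * INR pk)) / 2 ^ S N).
    { apply Rmult_le_pos; [|left; apply Rinv_0_lt_compat, pow_lt; lra].
      apply Rmult_le_pos; [lra|]. apply Rmult_le_pos; [apply pos_INR|].
      left; apply Rinv_0_lt_compat. assert (0 < INR pk) by (apply lt_0_INR; lia). lra. }
    enough (INR (sumnat (fun j => count_upto (Y j) N) (S N)) + 2 * (INR N / (16 * INR pk)) / 2 ^ S N <=
      2 * (INR N / (16 * INR pk))) by lra.
    apply Hg. intros j Hj.
    assert (Hpos : 0 < 2 ^ j * (16 * INR pk)).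
    { apply Rmult_lt_0_compat; [apply pow_lt; lra|]. assert (0 < INR pk) by (apply lt_0_INR; lia). lra. }
    destruct (Nat.lt_ge_cases k j) as [Hkj|Hkj].
    - assert (HB := cnt_Y_bound L B k j N Hkj). fold pk in HB.
      assert (E : count_upto (Y j) N = count_upto (WW L B j) N).
      { apply Nat.le_antisymm; apply cnt_mono; intros n _ Hn; [apply Hn|split; auto]. }
      rewrite E. apply le_INR in HB. rewrite mult_INR, !mult_INR, pow_INR in HB.
      assert (I2 : INR 2 = 2) by (simpl; lra). assert (I16 : INR 16 = 16) by (simpl; lra).
      rewrite I2, I16 in HB. assert (0 < INR pk) by (apply lt_0_INR; lia).
      replace (INR N / (16 * INR pk) / 2 ^ j) with (INR N / (2 ^ j * (16 * INR pk))) by (field; repeat split; try apply pow_nonzero; lra).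
      apply Rle_div_r; [exact Hpos|].
      nra.
    - assert (E : count_upto (Y j) N = 0%nat).
      { rewrite <- (cnt_false N). apply Nat.le_antisymm; apply cnt_mono; intros n _ Hn; [destruct Hn; lia|destruct Hn]. }
      rewrite E. simpl. apply Rmult_le_pos; [apply Rmult_le_pos|].
      + apply pos_INR.
      + left. apply Rinv_0_lt_compat. assert (0 < INR pk) by (apply lt_0_INR; lia). lra.
      + left. apply Rinv_0_lt_compat, pow_lt; lra. }
  assert (H4 : INR N / INR pk - 1 <= INR (N / pk)).
  { assert (Hm := Nat.div_mod N pk ltac:(lia)). assert (Hm2 := Nat.mod_upper_bound N pk ltac:(lia)).
    assert (INR N <= INR pk * INR (N / pk) + INR pk).
    { rewrite <- mult_INR, <- plus_INR. apply le_INR. lia. }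
    assert (0 < INR pk) by (apply lt_0_INR; lia).
    apply (Rmult_le_reg_l (INR pk)); [lra|].
    replace (INR pk * (INR N / INR pk - 1)) with (INR N - INR pk) by (field; lra). lra. }
  apply le_INR in H1. apply le_INR in H2. rewrite plus_INR in H2.
  assert (0 < INR pk) by (apply lt_0_INR; lia).
  assert (HN' : 4 * INR pk <= INR N) by (replace 4 with (INR 4) by (simpl; lra); rewrite <- mult_INR; apply le_INR; lia).
  assert (INR N / INR pk - 1 - INR N / (8 * INR pk) >= INR N / (2 * INR pk)).
  { unfold Rdiv. 
    assert (INR N * / INR pk >= 4) by (apply Rle_ge; apply (Rmult_le_reg_l (INR pk)); [lra|]; field_simplify; lra).
    replace (INR N * / (8 * INR pk)) with (/8 * (INR N * / INR pk)) by (field; lra).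
    replace (INR N * / (2 * INR pk)) with (/2 * (INR N * / INR pk)) by (field; lra).
    lra. }
  replace (2 * (INR N / (16 * INR pk))) with (INR N / (8 * INR pk)) in H3 by (field; lra).
  lra.
Qed.

Definition cover (L B : nat -> nat) k n p := AA L B k n /\ (n <= p < n + L k)%nat.

Definition bseq (L B : nat -> nat) (w : nat -> nat -> C) (p : nat) : C :=
  match excluded_middle_informative (exists kn : nat * nat, cover L B (fst kn) (snd kn) p) with
  | left H => let kn := proj1_sig (constructive_indefinite_description _ H) in
              w (fst kn) (p - snd kn)%nat
  | right _ => 0%C
  end.

Lemma cover_uniq L B k n j m p : cover L B k n p -> cover L B j m p -> k = j /\ n = m.
Proof.
  intros [Hk Hp] [Hj Hq].
  destruct (Nat.lt_total n m) as [Hnm|[<-|Hnm]].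
  - exfalso. assert (S := sep L B k j n m Hk Hj Hnm).
    assert (G1 := GG_ge L B k). assert (G2 := GG_mono L B k (Nat.max k j) ltac:(lia)). lia.
  - split; auto. exact (sep_eq L B k j n Hk Hj).
  - exfalso. assert (S := sep L B j k m n Hj Hk Hnm).
    assert (G1 := GG_ge L B j). assert (G2 := GG_mono L B j (Nat.max j k) ltac:(lia)). lia.
Qed.

Lemma b_cover L B w k n p : cover L B k n p -> bseq L B w p = w k (p - n)%nat.
Proof.
  intros Hc. unfold bseq.
  destruct (excluded_middle_informative _) as [H|H].
  - destruct (constructive_indefinite_description _ H) as [[j m] Hjm]. simpl in *.
    destruct (cover_uniq L B j m k n p Hjm Hc) as [-> ->]. reflexivity.
  - exfalso. apply H. exists (k, n). exact Hc.
Qed.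

Lemma b_nocover L B w p : (forall k n, ~ cover L B k n p) -> bseq L B w p = 0%C.
Proof.
  intros Hc. unfold bseq.
  destruct (excluded_middle_informative _) as [H|H]; [|reflexivity].
  exfalso. destruct H as [[k n] Hkn]. exact (Hc k n Hkn).
Qed.

Lemma b_bound L B w (Hw : forall k i, Cmod (w k i) <= INR (B k)) p :
  Cmod (bseq L B w p) <= INR p.
Proof.
  destruct (classic (exists kn : nat * nat, cover L B (fst kn) (snd kn) p)) as [[[k n] Hc]|Hn].
  - rewrite (b_cover L B w k n p Hc). eapply Rle_trans; [apply Hw|]. apply le_INR.
    destruct Hc as [HA Hp]. assert (H1 := AA_ge L B k n HA).
    assert (H2 := GG_ge L B k). assert (H3 := PP_ge L B k). simpl in *. lia.
  - rewrite b_nocover; [rewrite Cmod_0; apply pos_INR|].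
    intros k n Hc. apply Hn. exists (k, n). exact Hc.
Qed.

Lemma b_head L B w k n m : AA L B k n -> (m < L k)%nat -> bseq L B w (n + m) = w k m.
Proof.
  intros HA Hm. rewrite (b_cover L B w k n); [f_equal; lia|]. split; auto; lia.
Qed.

Lemma b_tail L B w (Hw : forall k i, Cmod (w k i) <= INR (B k)) k n m :
  AA L B k n -> (L k <= m)%nat ->
  bseq L B w (n + m) = 0%C \/ ((GG L B k < m)%nat /\ Cmod (bseq L B w (n + m)) <= INR m).
Proof.
  intros HA Hm.
  destruct (classic (exists kn : nat * nat, cover L B (fst kn) (snd kn) (n + m))) as [[[j s] Hc]|Hn].
  - right. simpl in Hc. rewrite (b_cover L B w j s _ Hc).
    destruct Hc as [Hj Hp].
    destruct (Nat.lt_total n s) as [Hns|[<-|Hns]].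
    + assert (S := sep L B k j n s HA Hj Hns).
      assert (G1 := GG_mono L B k (Nat.max k j) ltac:(lia)).
      assert (G2 := GG_mono L B j (Nat.max k j) ltac:(lia)).
      assert (G3 := GG_ge L B j).
      split; [lia|]. eapply Rle_trans; [apply Hw|]. apply le_INR. lia.
    + exfalso. assert (E := sep_eq L B k j n HA Hj). subst. lia.
    + exfalso. assert (S := sep L B j k s n Hj HA Hns).
      assert (G2 := GG_mono L B j (Nat.max j k) ltac:(lia)).
      assert (G3 := GG_ge L B j). lia.
  - left. apply b_nocover. intros j s Hc. apply Hn. exists (j, s). exact Hc.
Qed.

Definition fvec (L B : nat -> nat) (w : nat -> nat -> C) : coeffs :=
  fun p => Cmult (RtoC (/ INR (fact p))) (bseq L B w p).

Lemma iter_fvec L B w n m :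
  Nat.iter n Dop (fvec L B w) m = Cmult (RtoC (/ INR (fact m))) (bseq L B w (n + m)).
Proof.
  revert m. induction n as [|n IH]; intros m; [reflexivity|].
  simpl Nat.iter. unfold Dop at 1. rewrite IH.
  replace (n + S m)%nat with (S n + m)%nat by lia.
  rewrite Cmult_assoc. f_equal. rewrite <- RtoC_mult. f_equal.
  rewrite fact_simpl, mult_INR. rewrite S_INR.
  assert (0 < INR (fact m)) by (apply lt_0_INR, lt_O_fact).
  assert (0 <= INR m) by apply pos_INR.
  field. lra.
Qed.

Lemma fact_bound m : ((m + 1) * 2 ^ m <= 8 * fact m)%nat.
Proof.
  induction m as [|m IH]; [simpl; lia|].
  destruct m as [|m]; [simpl; lia|].
  destruct m as [|m]; [simpl; lia|].
  rewrite fact_simpl. rewrite Nat.pow_succ_r'.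
  set (q := (2 ^ S (S m))%nat) in *. set (f := fact (S (S m))) in *.
  assert (HH : ((S (S (S m)) + 1) * (2 * q) * (S (S m) + 1) <= (S (S (S m))) * (S (S m) + 1) * q * (S (S (S m))))%nat) by nia.
  nia.
Qed.

Lemma sq_bound (q : R) m : 0 <= q <= INR (m + 1) ->
  (q / INR (fact m)) ^ 2 <= 64 * (/ 2) ^ m * (/ 2) ^ m.
Proof.
  intros [Hq1 Hq2].
  assert (Hf : 0 < INR (fact m)) by (apply lt_0_INR, lt_O_fact).
  assert (HB := fact_bound m). apply le_INR in HB.
  rewrite !mult_INR, pow_INR in HB. 
  assert (I2 : INR 2 = 2) by (simpl; lra). assert (I8 : INR 8 = 8) by (simpl; lra).
  rewrite I2, I8 in HB.
  assert (H2 : 0 < 2 ^ m) by (apply pow_lt; lra).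
  assert (Hd : q / INR (fact m) <= 8 * (/ 2) ^ m).
  { rewrite <- Rinv_pow by lra. apply Rle_div_l; [exact Hf|].
    apply (Rmult_le_reg_r (2 ^ m)); [exact H2|].
    replace (8 * / 2 ^ m * INR (fact m) * 2 ^ m) with (8 * INR (fact m)) by (field; lra).
    nra. }
  assert (0 <= q / INR (fact m)) by (apply Rmult_le_pos; [lra|left; apply Rinv_0_lt_compat; lra]).
  assert (0 <= (/ 2) ^ m) by (apply pow_le; lra).
  replace (64 * (/ 2) ^ m * (/ 2) ^ m) with ((8 * (/ 2) ^ m) ^ 2) by ring.
  apply pow_incr. lra.
Qed.

Lemma cmod_scal m z : Cmod (Cmult (RtoC (/ INR (fact m))) z) = Cmod z / INR (fact m).
Proof.
  rewrite Cmod_mult, Cmod_R. rewrite Rabs_pos_eq.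
  - unfold Rdiv. ring.
  - left. apply Rinv_0_lt_compat, lt_0_INR, lt_O_fact.
Qed.

Lemma ex_series_geom_scal c : ex_series (fun m => c * (/ 2) ^ m).
Proof.
  exists (c * (/ (1 - / 2))). apply (is_series_scal_l c (fun m => (/ 2) ^ m)). apply is_series_geom.
  rewrite Rabs_pos_eq; lra.
Qed.

Lemma pow_le1' x n : 0 <= x <= 1 -> x ^ n <= 1.
Proof. intros H. rewrite <- (pow1 n). apply pow_incr. lra. Qed.

Lemma pow_anti x m n : 0 <= x <= 1 -> (m <= n)%nat -> x ^ n <= x ^ m.
Proof.
  intros Hx Hmn. replace n with (m + (n - m))%nat by lia. rewrite pow_add.
  assert (0 <= x ^ m) by (apply pow_le; lra).
  assert (x ^ (n - m) <= 1) by (apply pow_le1'; lra).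
  assert (0 <= x ^ (n - m)) by (apply pow_le; lra). nra.
Qed.

Lemma norm_R (x : R) : norm x = Rabs x.
Proof. reflexivity. Qed.

Lemma iter_in_H2 L B w (Hw : forall k i, Cmod (w k i) <= INR (B k)) n :
  in_H2 (Nat.iter n Dop (fvec L B w)).
Proof.
  unfold in_H2.
  apply (@ex_series_le R_AbsRing R_CompleteNormedModule _ (fun m => (INR n + 1) ^ 2 * 64 * (/ 2) ^ m)).
  2: apply ex_series_geom_scal.
  intros m. rewrite norm_R, Rabs_pos_eq by (apply pow_le, Cmod_ge_0).
  rewrite iter_fvec, cmod_scal.
  assert (Hb := b_bound L B w Hw (n + m)).
  set (c := Cmod (bseq L B w (n + m))) in *.
  assert (Hc : 0 <= c) by apply Cmod_ge_0.
  assert (Hn : 0 < INR n + 1) by (assert (0 <= INR n) by apply pos_INR; lra).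
  assert (Hs := sq_bound (c / (INR n + 1)) m).
  assert (H1 : 0 <= c / (INR n + 1) <= INR (m + 1)).
  { split; [apply Rmult_le_pos; [lra|left; apply Rinv_0_lt_compat; lra]|].
    apply Rle_div_l; [lra|]. rewrite plus_INR in *. simpl INR.
    assert (0 <= INR m) by apply pos_INR. assert (0 <= INR n) by apply pos_INR. nra. }
  specialize (Hs H1).
  assert (E : (c / INR (fact m)) ^ 2 = (INR n + 1) ^ 2 * (c / (INR n + 1) / INR (fact m)) ^ 2).
  { assert (0 < INR (fact m)) by (apply lt_0_INR, lt_O_fact). field. lra. }
  rewrite E.
  assert (0 <= (/ 2) ^ m <= 1).
  { split; [apply pow_le; lra|]. apply pow_le1'. lra. }
  assert (0 <= (INR n + 1) ^ 2) by (apply pow_le; lra).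
  assert (64 * (/ 2) ^ m * (/ 2) ^ m <= 64 * (/ 2) ^ m) by nra.
  nra.
Qed.

Lemma iter_tail L B w (Hw : forall k i, Cmod (w k i) <= INR (B k)) k n m :
  AA L B k n -> (L k <= m)%nat ->
  Cmod (Nat.iter n Dop (fvec L B w) m) ^ 2 <= 64 * (/ 2) ^ (GG L B k) * (/ 2) ^ m.
Proof.
  intros HA Hm. rewrite iter_fvec, cmod_scal.
  destruct (b_tail L B w Hw k n m HA Hm) as [E|[HG Hc]].
  - rewrite E, Cmod_0. unfold Rdiv. rewrite Rmult_0_l. simpl.
    rewrite Rmult_0_l. apply Rmult_le_pos; [apply Rmult_le_pos; [lra|]|]; apply pow_le; lra.
  - assert (Hs := sq_bound (Cmod (bseq L B w (n + m))) m).
    assert (H1 : 0 <= Cmod (bseq L B w (n + m)) <= INR (m + 1)).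
    { split; [apply Cmod_ge_0|]. rewrite plus_INR. simpl. lra. }
    specialize (Hs H1). eapply Rle_trans; [exact Hs|].
    apply Rmult_le_compat_r; [apply pow_le; lra|].
    apply Rmult_le_compat_l; [lra|].
    apply pow_anti; [lra|lia].
Qed.

Lemma tail_small (f : nat -> R) : ex_series f -> forall d, 0 < d ->
  exists M0, forall N, (M0 <= N)%nat -> Series (fun k => f (N + k)%nat) < d.
Proof.
  intros Hf d Hd.
  assert (H := Series_correct f Hf).
  assert (H' : is_lim_seq (sum_n f) (Series f)) by exact H.
  apply is_lim_seq_spec in H'. destruct (H' (mkposreal d Hd)) as [M HM]. simpl in HM.
  exists (S M). intros N HN.
  specialize (HM (pred N) ltac:(lia)). rewrite sum_n_Reals in HM.
  rewrite (Series_incr_n f N) in HM by (lia || exact Hf).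
  apply Rabs_lt_between in HM. lra.
Qed.

Lemma Z_split (z : Z) : INR (Z.to_nat z) - INR (Z.to_nat (- z)) = IZR z.
Proof.
  destruct z as [|p|p]; simpl.
  - lra.
  - rewrite INR_IPR. unfold IZR. simpl. lra.
  - rewrite INR_IPR. unfold IZR. simpl. lra.
Qed.

Fixpoint stream (s m : nat) : nat :=
  match m with O => fst (of_nat s) | S m' => stream (snd (of_nat s)) m' end.

Lemma stream_ex (e : nat -> nat) M : exists s, forall m, (m < M)%nat -> stream s m = e m.
Proof.
  revert e. induction M as [|M IH]; intros e.
  - exists O. intros; lia.
  - destruct (IH (fun m => e (S m))) as [s Hs].
    exists (to_nat (e O, s)). intros [|m] Hm; cbn [stream]; rewrite cancel_of_to; cbn [fst snd]; auto.
    apply Hs. lia.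
Qed.

Definition Lt (k : nat) : nat := fst (of_nat k).
Definition ent (k i : nat) : nat := stream (snd (of_nat k)) i.
Definition X1 k i := fst (of_nat (fst (of_nat (ent k i)))).
Definition X2 k i := snd (of_nat (fst (of_nat (ent k i)))).
Definition Y1 k i := fst (of_nat (snd (of_nat (ent k i)))).
Definition Y2 k i := snd (of_nat (snd (of_nat (ent k i)))).
Definition den (k i : nat) : R := (INR (Lt k) + 1) * 2 ^ i.
Definition coef (k i : nat) : C :=
  if Nat.ltb i (Lt k) then ((INR (X1 k i) - INR (X2 k i)) / den k i,
                            (INR (Y1 k i) - INR (Y2 k i)) / den k i)
  else 0%C.
Definition wd (k i : nat) : C := Cmult (RtoC (INR (fact i))) (coef k i).
Definition Bt (k : nat) : nat :=
  sumnat (fun i => fact i * (X1 k i + X2 k i + Y1 k i + Y2 k i))%nat (Lt k).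

Lemma sumnat_term f T i : (i < T)%nat -> (f i <= sumnat f T)%nat.
Proof. induction T; simpl; intros H; [lia|]. destruct (Nat.eq_dec i T); [subst; lia|]. assert (H' := IHT ltac:(lia)). lia. Qed.

Lemma den_ge1 k i : 1 <= den k i.
Proof.
  unfold den. assert (0 <= INR (Lt k)) by apply pos_INR.
  assert (1 <= 2 ^ i).
  { rewrite <- (pow1 i). apply pow_incr. lra. }
  nra.
Qed.

Lemma Cmod_pair_le (a b : R) : Cmod (a, b) <= Rabs a + Rabs b.
Proof.
  unfold Cmod. simpl fst; simpl snd.
  rewrite <- (sqrt_pow2 (Rabs a + Rabs b)) by (assert (0 <= Rabs a) by apply Rabs_pos; assert (0 <= Rabs b) by apply Rabs_pos; lra).
  apply sqrt_le_1_alt.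
  assert (0 <= Rabs a) by apply Rabs_pos; assert (0 <= Rabs b) by apply Rabs_pos.
  replace (a ^ 2) with (Rabs a ^ 2) by apply pow2_abs.
  replace (b ^ 2) with (Rabs b ^ 2) by apply pow2_abs.
  nra.
Qed.

Lemma wd_bound k i : Cmod (wd k i) <= INR (Bt k).
Proof.
  unfold wd, coef. destruct (Nat.ltb i (Lt k)) eqn:Hi.
  - apply Nat.ltb_lt in Hi.
    rewrite Cmod_mult, Cmod_R, Rabs_pos_eq by apply pos_INR.
    eapply Rle_trans with (INR (fact i) * INR (X1 k i + X2 k i + Y1 k i + Y2 k i)).
    + apply Rmult_le_compat_l; [apply pos_INR|].
      eapply Rle_trans; [apply Cmod_pair_le|].
      assert (Hd := den_ge1 k i). rewrite !plus_INR.
      assert (Ha : forall x y, 0 <= x -> 0 <= y -> Rabs ((x - y) / den k i) <= x + y).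
      { intros x y Hx Hy. unfold Rdiv. rewrite Rabs_mult, Rabs_inv, (Rabs_pos_eq (den k i)) by lra.
        apply Rle_div_l; [lra|]. unfold Rabs; destruct Rcase_abs; nra. }
      assert (H1 := Ha _ _ (pos_INR (X1 k i)) (pos_INR (X2 k i))).
      assert (H2 := Ha _ _ (pos_INR (Y1 k i)) (pos_INR (Y2 k i))). lra.
    + rewrite <- mult_INR. apply le_INR. unfold Bt.
      apply (sumnat_term (fun i => fact i * (X1 k i + X2 k i + Y1 k i + Y2 k i))%nat). exact Hi.
  - rewrite Cmult_0_r, Cmod_0. apply pos_INR.
Qed.

Lemma Cmod_sq (z : C) : Cmod z ^ 2 = fst z ^ 2 + snd z ^ 2.
Proof. unfold Cmod. rewrite pow2_sqrt; [reflexivity|]. assert (H1 := pow2_ge_0 (fst z)); assert (H2 := pow2_ge_0 (snd z)); lra. Qed.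

Lemma Cmod_minus_le (a b : C) : Cmod (Cminus a b) <= Cmod a + Cmod b.
Proof. unfold Cminus. eapply Rle_trans; [apply Cmod_triangle|]. rewrite Cmod_opp. lra. Qed.

Lemma round_close r D : 0 < D -> Rabs (IZR (up (r * D)) / D - r) <= / D.
Proof.
  intros HD. destruct (archimed (r * D)) as [H1 H2].
  replace (IZR (up (r * D)) / D - r) with ((IZR (up (r * D)) - r * D) / D) by (field; lra).
  unfold Rdiv. rewrite Rabs_mult, Rabs_inv, (Rabs_pos_eq D) by lra.
  rewrite Rabs_pos_eq by lra.
  assert (0 < / D) by (apply Rinv_0_lt_compat; lra). nra.
Qed.

Lemma approx (g : coeffs) : in_H2 g -> forall eps, 0 < eps -> exists k, forall x : coeffs,
  (forall m, (m < Lt k)%nat -> x m = coef k m) ->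
  (forall m, (Lt k <= m)%nat -> Cmod (x m) ^ 2 <= 64 * (/ 2) ^ (GG Lt Bt k) * (/ 2) ^ m) ->
  Series (fun m => Cmod (Cminus (g m) (x m)) ^ 2) < eps ^ 2.
Proof.
  intros Hg eps Heps.
  set (f := fun m => Cmod (g m) ^ 2).
  assert (He2 : 0 < eps ^ 2) by (apply pow_lt; lra).
  destruct (tail_small f Hg (eps ^ 2 / 4) ltac:(lra)) as [M0 HM0].
  destruct (archimed_cor1 (eps ^ 2 / 768) ltac:(lra)) as [N1 [HN1 HN1p]].
  set (N := Nat.max (S M0) N1).
  set (dd := fun m : nat => (INR N + 1) * 2 ^ m).
  set (zr := fun m => up (fst (g m) * dd m)).
  set (zi := fun m => up (snd (g m) * dd m)).
  set (e := fun m => to_nat (to_nat (Z.to_nat (zr m), Z.to_nat (- zr m)),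
                             to_nat (Z.to_nat (zi m), Z.to_nat (- zi m)))).
  destruct (stream_ex e N) as [s Hs].
  exists (to_nat (N, s)). set (k := to_nat (N, s)).
  assert (HL : Lt k = N) by (unfold Lt, k; rewrite cancel_of_to; reflexivity).
  assert (Hc : forall m, (m < N)%nat -> coef k m = (IZR (zr m) / dd m, IZR (zi m) / dd m)).
  { intros m Hm. unfold coef. rewrite HL.
    replace (Nat.ltb m N) with true by (symmetry; apply Nat.ltb_lt; exact Hm).
    assert (Hent : ent k m = e m).
    { unfold ent, k. rewrite cancel_of_to. simpl snd. apply Hs. exact Hm. }
    unfold X1, X2, Y1, Y2, den. rewrite Hent, HL. unfold e. repeat (rewrite cancel_of_to; cbn [fst snd]). rewrite !Z_split. reflexivity. }
    idtac.
  intros x Hx1 Hx2. rewrite HL in Hx1, Hx2.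
  set (G := GG Lt Bt k) in *.
  assert (HNG : (N <= G)%nat) by (rewrite <- HL; apply GG_ge).
  assert (HN0 : 0 < INR N + 1) by (assert (0 <= INR N) by apply pos_INR; lra).
  set (K := 2 / (INR N + 1) ^ 2 + 128 * (/ 2) ^ G).
  assert (HK : 0 <= K).
  { unfold K. assert (0 <= (/ 2) ^ G) by (apply pow_le; lra).
    assert (0 < 2 / (INR N + 1) ^ 2) by (apply Rdiv_lt_0_compat; [lra|apply pow_lt; lra]). lra. }
  set (h := fun m => if Nat.ltb m N then 0 else f m).
  assert (Hh0 : forall m, 0 <= h m <= f m).
  { intros m. unfold h, f. destruct (Nat.ltb m N); split; try lra; try apply pow2_ge_0. }
  assert (Exh : ex_series h).
  { apply (@ex_series_le R_AbsRing R_CompleteNormedModule _ f); [|exact Hg].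
    intros m. rewrite norm_R, Rabs_pos_eq by apply Hh0. apply Hh0. }
  assert (Exg : ex_series (fun m => (/ 2) ^ m)).
  { exists (/ (1 - / 2)). apply is_series_geom. rewrite Rabs_pos_eq; lra. }
  assert (Sg : Series (fun m => (/ 2) ^ m) = 2).
  { apply is_series_unique. assert (H := is_series_geom (/ 2) ltac:(rewrite Rabs_pos_eq; lra)). replace (/ (1 - / 2)) with 2 in H by field. exact H. }
  assert (Ex2h : ex_series (fun m => 2 * h m)).
  { destruct Exh as [l Hl]. exists (2 * l). apply (is_series_scal_l 2 h). exact Hl. }
  assert (ExK : ex_series (fun m => K * (/ 2) ^ m)) by apply ex_series_geom_scal.
  set (maj := fun m => 2 * h m + K * (/ 2) ^ m).
  assert (Exmaj : ex_series maj).
  { destruct Ex2h as [l1 H1]. destruct ExK as [l2 H2]. exists (l1 + l2).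
    apply (is_series_plus _ _ l1 l2 H1 H2). }
  assert (Smaj : Series maj = 2 * Series (fun k => f (N + k)%nat) + K * 2).
  { unfold maj. rewrite Series_plus by assumption. rewrite !Series_scal_l. replace (Series (pow (/ 2))) with 2 by (symmetry; exact Sg).
    rewrite (Series_incr_n_aux h N).
    - f_equal. f_equal. apply Series_ext. intros n. unfold h.
      replace (Nat.ltb (N + n) N) with false by (symmetry; apply Nat.ltb_ge; lia). reflexivity.
    - intros n Hn. unfold h. replace (Nat.ltb n N) with true by (symmetry; apply Nat.ltb_lt; lia). reflexivity. }
  assert (Hle : Series (fun m => Cmod (Cminus (g m) (x m)) ^ 2) <= Series maj).
  { apply Series_le; [|exact Exmaj]. intros m. split; [apply pow2_ge_0|].
    unfold maj. destruct (Nat.lt_ge_cases m N) as [Hm|Hm].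
    - unfold h. replace (Nat.ltb m N) with true by (symmetry; apply Nat.ltb_lt; lia).
      rewrite Hx1 by exact Hm. rewrite Hc by exact Hm. rewrite Cmod_sq. simpl fst; simpl snd.
      assert (Hd : 0 < dd m) by (unfold dd; apply Rmult_lt_0_compat; [lra|apply pow_lt; lra]).
      assert (R1 := round_close (fst (g m)) (dd m) Hd).
      assert (R2 := round_close (snd (g m)) (dd m) Hd).
      fold (zr m) in R1. fold (zi m) in R2.
      assert (Q1 : (fst (g m) - IZR (zr m) / dd m) ^ 2 <= (/ dd m) ^ 2).
      { rewrite <- pow2_abs. apply pow_incr. split; [apply Rabs_pos|].
        rewrite Rabs_minus_sym. exact R1. }
      assert (Q2 : (snd (g m) - IZR (zi m) / dd m) ^ 2 <= (/ dd m) ^ 2).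
      { rewrite <- pow2_abs. apply pow_incr. split; [apply Rabs_pos|].
        rewrite Rabs_minus_sym. exact R2. }
      assert (Q3 : (/ dd m) ^ 2 <= / (INR N + 1) ^ 2 * (/ 2) ^ m).
      { unfold dd. rewrite Rinv_mult, Rpow_mult_distr.
        rewrite <- (Rinv_pow (INR N + 1)) by (apply Rgt_not_eq; lra).
        apply Rmult_le_compat_l; [left; apply Rinv_0_lt_compat, pow_lt; lra|].
        rewrite (Rinv_pow 2 m) by lra. rewrite <- pow_mult.
        apply pow_anti; [lra|lia]. }
      assert (0 <= (/ 2) ^ G * (/ 2) ^ m) by (apply Rmult_le_pos; apply pow_le; lra).
      unfold K. unfold Rdiv. lra.
    - unfold h. replace (Nat.ltb m N) with false by (symmetry; apply Nat.ltb_ge; lia).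
      assert (T := Cmod_minus_le (g m) (x m)).
      assert (Hxm := Hx2 m Hm).
      assert (0 <= Cmod (Cminus (g m) (x m))) by apply Cmod_ge_0.
      assert (0 <= Cmod (g m)) by apply Cmod_ge_0. assert (0 <= Cmod (x m)) by apply Cmod_ge_0.
      assert (Cmod (Cminus (g m) (x m)) ^ 2 <= 2 * f m + 2 * Cmod (x m) ^ 2).
      { unfold f. assert (Cmod (Cminus (g m) (x m)) ^ 2 <= (Cmod (g m) + Cmod (x m)) ^ 2) by (apply pow_incr; lra). assert (0 <= (Cmod (g m) - Cmod (x m)) ^ 2) by apply pow2_ge_0. nra. }
      assert (0 <= 2 / (INR N + 1) ^ 2 * (/ 2) ^ m).
      { apply Rmult_le_pos; [apply Rmult_le_pos; [lra|left; apply Rinv_0_lt_compat, pow_lt; lra]|apply pow_le; lra]. }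
      unfold K. nra. }
  assert (Ht := HM0 N ltac:(lia)).
  assert (HNN : / (INR N + 1) <= / INR N1).
  { apply Rinv_le_contravar; [apply lt_0_INR; lia|].
    assert (INR N1 <= INR N) by (apply le_INR; lia). lra. }
  assert (HK2 : K * 2 <= 260 * / (INR N + 1)).
  { unfold K.
    assert (A1 : 2 / (INR N + 1) ^ 2 <= 2 * / (INR N + 1)).
    { unfold Rdiv. apply Rmult_le_compat_l; [lra|]. apply Rinv_le_contravar; [lra|].
      assert (1 <= INR N + 1) by (assert (0 <= INR N) by apply pos_INR; lra). simpl. nra. }
    assert (A2 : (/ 2) ^ G <= / (INR N + 1)).
    { eapply Rle_trans; [apply pow_anti; [lra|exact HNG]|].
      rewrite <- Rinv_pow by lra. apply Rinv_le_contravar; [lra|].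
      assert (HP := pow2_ge N). apply le_INR in HP. rewrite pow_INR, plus_INR in HP. simpl in HP.
      replace (1 + 1) with 2 in HP by lra. lra. }
    lra. }
  lra.
Qed.

Theorem mainTheorem6 : D_frequently_hypercyclic_H2.
Proof.
  set (f := fvec Lt Bt wd).
  assert (Hw := wd_bound).
  assert (HI : forall n, in_H2 (Nat.iter n Dop f)) by (intros n; apply (iter_in_H2 Lt Bt wd Hw n)).
  exists f. split; [split; [exact (HI O)|exact (HI 1%nat)]|split].
  { intros n _. split; [exact (HI n)|exact (HI (S n))]. }
  intros U [HUH HUo] [g Hg].
  destruct (HUo g Hg) as [eps [Heps Hball]].
  destruct (approx g (HUH g Hg) eps Heps) as [k Hk].
  assert (HA : forall n, AA Lt Bt k n -> U (Nat.iter n Dop f)).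
  { intros n Hn. apply Hball; [exact (HI n)|].
    assert (HS : Series (fun m => Cmod (Cminus (g m) (Nat.iter n Dop f m)) ^ 2) < eps ^ 2).
    { apply Hk.
      - intros m Hm. unfold f. rewrite iter_fvec. rewrite (b_head Lt Bt wd k n m Hn Hm).
        unfold wd. rewrite Cmult_assoc, <- RtoC_mult.
        rewrite Rinv_l by (apply not_0_INR, fact_neq_0). apply Cmult_1_l.
      - intros m Hm. exact (iter_tail Lt Bt wd Hw k n m Hn Hm). }
    unfold H2_dist, H2_norm.
    set (S := Series _) in *.
    destruct (Rle_lt_dec S 0) as [HS0|HS0].
    - rewrite sqrt_neg_0 by exact HS0. exact Heps.
    - rewrite <- (sqrt_pow2 eps) by lra. apply sqrt_lt_1_alt. lra. }
  set (pk := PP Lt Bt k). assert (Hpk := PP_pos Lt Bt k). fold pk in Hpk.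
  assert (Hpk' : 0 < INR pk) by (apply lt_0_INR; lia).
  unfold lower_density.
  apply (Rbar_lt_le_trans _ (Finite (/ (2 * INR pk)))).
  { simpl. apply Rinv_0_lt_compat. lra. }
  rewrite <- (LimInf_seq_const (/ (2 * INR pk))).
  apply LimInf_le. exists (4 * pk)%nat. intros N HN.
  assert (HD := density Lt Bt k N HN). fold pk in HD.
  assert (HC : (count_upto (AA Lt Bt k) N <= count_upto (fun n => U (Nat.iter n Dop f)) N)%nat).
  { apply cnt_mono. intros n _ Hn. apply HA. exact Hn. }
  apply le_INR in HC.
  assert (HN0 : 0 < INR N) by (apply lt_0_INR; lia).
  apply Rle_div_r; [exact HN0|].
  replace (/ (2 * INR pk) * INR N) with (INR N / (2 * INR pk)) by (field; lra).
  lra.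
Qed.
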